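(* For every $\epsilon>0$ and every real $X>1$, \[\sum_{n\ge1,\ n \text{ square-free}}\ \prod_{p\mid n}\frac{\log X}{p\log p}\ll X^{\epsilon},\] where the product is over the primes dividing $n$ and the implied constant depends only on $\epsilon$. *)

(* Defs.v *)
From HB Require Import structures.
From mathcomp Require Import all_boot all_order all_algebra.
From mathcomp Require Import all_classical all_reals all_analysis.
Set Implicit Arguments. Unset Strict Implicit. Unset Printing Implicit Defensive.
Import Order.TTheory GRing.Theory Num.Theory.
Local Open Scope ring_scope.

Definition squarefree (n : nat) : bool :=
  (0 < n)%N && all (fun p => ~~ (p * p %| n)%N) (primes n).

Definition termB1 {R : realType} (X : R) (n : nat) : R :=
  if squarefree n then \prod_(p <- primes n) (ln X / (p%:R * ln (p%:R : R)))
  else 0.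

(* Main.v *)
Require Import Defs.
From HB Require Import structures.
From mathcomp Require Import all_boot all_order all_algebra.
From mathcomp Require Import all_classical all_reals all_analysis.
From mathcomp Require Import zify ring lra.
Import Order.TTheory GRing.Theory Num.Theory.

Lemma not_dvd_fact p m : prime p -> (m < p)%N -> ~~ (p %| m`!).
Proof.
move=> pp lt; rewrite fact_prod Euclid_dvd_prod // big_nat_cond.
apply: (big_ind (fun b => ~~ b)) => //; first by move=> x y /negbTE -> /negbTE ->.
move=> i /andP[/andP[i1 i2] _].
apply/negP => /(dvdn_leq i1); lia.
Qed.

Lemma cheb m : (0 < m)%N ->
  (m ^ (\sum_(m.+1 <= p < (2 * m).+1 | prime p) 1) <= 4 ^ m)%N.
Proof.
move=> m0.
set Q := \prod_(m.+1 <= p < (2 * m).+1 | prime p) p.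
have h1 : (m ^ (\sum_(m.+1 <= p < (2 * m).+1 | prime p) 1) <= Q)%N.
  rewrite (big_morph (fun n => m ^ n) (expnD m) (expn0 m)) /Q.
  rewrite big_nat_cond [X in (_ <= X)%N]big_nat_cond.
  apply: leq_prod => p /andP[/andP[hp _] _]; rewrite expn1; exact: ltnW.
have hm : (m <= 2 * m)%N by lia.
have hcop : coprime Q m`!.
  rewrite /Q big_nat_cond; apply: (big_ind (fun x => coprime x m`!)).
  - exact: coprime1n.
  - by move=> x y hx hy; rewrite coprimeMl hx hy.
  move=> p /andP[/andP[hp _] pp].
  by rewrite prime_coprime // not_dvd_fact.
have h2 : (Q %| 'C(2 * m, m))%N.
  have hf := fact_split hm.
  have hb := bin_fact hm.
  have e : (2 * m - m = m)%N by lia.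
  rewrite e hf mulnCA in hb.
  have hP : ('C(2 * m, m) * m`! = \prod_(m.+1 <= k < (2 * m).+1) k)%N.
    by apply/eqP; rewrite -(eqn_pmul2l (fact_gt0 m)) hb.
  rewrite -(Gauss_dvdl _ hcop) hP (bigID prime) /=.
  exact: dvdn_mulr.
have h3 : ('C(2 * m, m) <= 4 ^ m)%N.
  have := expnDn 1 1 (2 * m).
  rewrite (bigD1 (Ordinal (_ : m < (2 * m).+1)%N)) /=; last by lia.
  rewrite !exp1n muln1 => e.
  by rewrite (_ : 4 = 2 ^ 2)%N // -expnM e muln1 leq_addr.
apply: (leq_trans h1); apply: leq_trans h3.
by apply: dvdn_leq => //; rewrite bin_gt0.
Qed.

Lemma sqf_logn n p : squarefree n -> logn p n = (p \in primes n).
Proof.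
move=> /andP[n0 /allP h]; case: (boolP (p \in primes n)) => hp; last first.
  by apply/eqP; rewrite -leqn0 leqNgt logn_gt0 (negbTE hp).
have pp : prime p by move: hp; rewrite mem_primes => /andP[].
have := h p hp; have := logn_gt0 p n; rewrite hp => lg.
case: (ltnP 1 (logn p n)) => [l2|]; last by lia.
by rewrite mulnn (pfactor_dvdn 2 pp n0) l2.
Qed.

Lemma primes_lt n N p : (n < N)%N -> p \in primes n -> (p < N)%N.
Proof.
move=> nN; rewrite mem_primes => /and3P[_ n0 d].
exact: leq_ltn_trans (dvdn_leq n0 d) nN.
Qed.

Local Open Scope ring_scope.
Lemma prod_primes_ord (R : comNzRingType) (a : nat -> R) N n : (n < N)%N ->
  \prod_(p <- primes n) a p = \prod_(i < N | val i \in primes n) a i.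
Proof.
move=> nN; rewrite -(big_mkord (fun i => i \in primes n)) -[RHS]big_filter.
apply: perm_big; apply: uniq_perm.
- exact: primes_uniq.
- by apply: filter_uniq; exact: iota_uniq.
move=> x; rewrite mem_filter mem_index_iota /=.
case: (boolP (x \in primes n)) => //= hx.
by rewrite (@primes_lt n N x nN hx).
Qed.

Lemma sqf_sum (R : realDomainType) (a : nat -> R) N : (forall p, prime p -> 0 <= a p) ->
  \sum_(0 <= n < N) (if squarefree n then \prod_(p <- primes n) a p else 0)
  <= \prod_(0 <= p < N | prime p) (1 + a p).
Proof.
move=> a0.
pose F (i : 'I_N) := if prime i then a i else 0.
have F0 i : 0 <= F i by rewrite /F; case: ifP => // /a0.
have -> : \prod_(0 <= p < N | prime p) (1 + a p) = \prod_(i < N) (F i + 1).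
  rewrite big_mkord big_mkcond /=; apply: eq_bigr => i _; rewrite /F.
  by case: ifP => _; [rewrite addrC | rewrite add0r].
rewrite bigA_distr.
pose S (n : 'I_N) := [set i : 'I_N | val i \in primes n].
pose H (J : {set 'I_N}) := \prod_(i in J) F i.
have eH (J : {set 'I_N}) : \prod_i (if i \in J then F i else 1) = H J.
  by rewrite /H [RHS]big_mkcond.
under eq_bigr => K _ do rewrite eH.
have -> : \sum_(K in {set 'I_N}) H K = \sum_(K : {set 'I_N}) H K by [].
rewrite big_mkord.
have -> : \sum_(n < N) (if squarefree n then \prod_(p <- primes n) a p else 0)
    = \sum_(n < N | squarefree n) H (S n).
  rewrite [RHS]big_mkcond; apply: eq_bigr => n _; case: ifP => // _.
  rewrite (@prod_primes_ord _ a N n (ltn_ord n)) /H; apply: eq_big => i.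
    by rewrite inE.
  by move=> hi; rewrite /F ifT //; move: hi; rewrite mem_primes => /andP[].
have inj : {in [set n : 'I_N | squarefree n] &, injective S}.
  move=> n1 n2; rewrite !inE => s1 s2 eS; apply: val_inj; apply: eqn_from_log.
  - by case/andP: s1.
  - by case/andP: s2.
  move=> p /=; rewrite (@sqf_logn n1 p s1) (@sqf_logn n2 p s2); congr nat_of_bool.
  case: (ltnP p N) => hp.
    by have := congr1 (fun J : {set 'I_N} => Ordinal hp \in J) eS; rewrite /= !inE.
  have f1 : (p \in primes n1) = false.
    by apply/negP => /(@primes_lt n1 N p (ltn_ord n1)); rewrite ltnNge hp.
  have f2 : (p \in primes n2) = false.
    by apply/negP => /(@primes_lt n2 N p (ltn_ord n2)); rewrite ltnNge hp.
  by rewrite f1 f2.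
have -> : \sum_(n < N | squarefree n) H (S n) = \sum_(J in S @: [set n : 'I_N | squarefree n]) H J.
  by rewrite big_imset //=; apply: eq_bigl => n; rewrite inE.
rewrite [X in _ <= X](bigID (fun J => J \in S @: [set n : 'I_N | squarefree n])) /=.
by rewrite lerDl sumr_ge0 // => J _; apply: prodr_ge0.
Qed.
Local Open Scope ring_scope.

Lemma ln_ge_1Vx (R : realType) (x : R) : 0 < x -> 1 - x^-1 <= ln x.
Proof.
move=> x0; have := expR_ge1Dx (- ln x).
rewrite expRN lnK ?posrE //; lra.
Qed.

Lemma plnp_ge1 (R : realType) p : prime p -> 1 <= (p%:R : R) * ln (p%:R : R).
Proof.
move=> pp; have p2 : (2 <= p)%N by exact: prime_gt1.
have p2r : (2 : R) <= p%:R by rewrite (ler_nat R 2 p).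
have p0 : (0 : R) < p%:R by lra.
have := ler_wpM2l (ltW p0) (@ln_ge_1Vx R _ p0).
rewrite mulrBr mulr1 mulfV ?gt_eqF //; lra.
Qed.

Lemma lnp_gt0 (R : realType) p : prime p -> 0 < ln (p%:R : R).
Proof.
move=> pp; apply: ln_gt0; have p2 : (2 <= p)%N by exact: prime_gt1.
by rewrite (ltr_nat R 1 p).
Qed.

Lemma f_ge0 (R : realType) p : prime p -> 0 <= ((p%:R : R) * ln (p%:R : R))^-1.
Proof. by move=> pp; rewrite invr_ge0; have := @plnp_ge1 R p pp; lra. Qed.

Lemma cnt_block k : (0 < k)%N ->
  ((\sum_((2^k).+1 <= p < (2 * 2^k).+1 | prime p) 1) * k <= 2 * 2^k)%N.
Proof.
move=> k0; have := @cheb (2^k) (expn_gt0 2 k).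
rewrite -expnM (_ : 4 = 2 ^ 2)%N // -expnM leq_exp2l // => h; by rewrite mulnC.
Qed.

Lemma block (R : realType) k : (0 < k)%N ->
  \sum_((2^k).+1 <= p < (2 * 2^k).+1 | prime p) ((p%:R : R) * ln (p%:R : R))^-1
  <= 4 / ln (2 : R) * (k%:R^-1 - k.+1%:R^-1).
Proof.
move=> k0.
set c := \sum_((2^k).+1 <= p < (2 * 2^k).+1 | prime p) 1%N.
have l2 : (0 : R) < ln 2 by apply: ln_gt0; lra.
have kr : (1 : R) <= k%:R by rewrite (ler_nat R 1 k).
have tk : (0 : R) < (2^k)%:R by rewrite ltr0n expn_gt0.
set c0 : R := ((2^k)%:R * (k%:R * ln 2))^-1.
have c0p : 0 < (2^k)%:R * (k%:R * ln (2 : R)).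
  by apply: mulr_gt0 => //; apply: mulr_gt0 => //; lra.
have h1 : \sum_((2^k).+1 <= p < (2 * 2^k).+1 | prime p) ((p%:R : R) * ln (p%:R : R))^-1
     <= \sum_((2^k).+1 <= p < (2 * 2^k).+1 | prime p) c0.
  rewrite big_nat_cond [X in _ <= X]big_nat_cond; apply: ler_sum => p /andP[/andP[hp _] pp].
  have pr : (2^k)%:R < (p%:R : R) by rewrite ltr_nat.
  have lp : k%:R * ln (2 : R) <= ln (p%:R : R).
    rewrite mulr_natl -lnXn; last by lra.
    rewrite ler_ln ?posrE; [|by rewrite exprn_gt0 //; lra|lra].
    by rewrite -natrX; lra.
  rewrite /c0 lef_pV2 ?posrE //; last by apply: mulr_gt0; [lra|exact: lnp_gt0].
  apply: ler_pM; [exact: ltW | apply: mulr_ge0; lra | exact: ltW | exact: lp].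
apply: (le_trans h1).
have -> : \sum_((2^k).+1 <= p < (2 * 2^k).+1 | prime p) c0 = c%:R * c0.
  by rewrite natr_sum big_distrl /=; apply: eq_bigr => i _; rewrite mul1r.
have hc : (c%:R : R) * k%:R <= 2 * (2^k)%:R.
  by rewrite -!natrM ler_nat cnt_block.
have hc' : (c%:R : R) <= 2 * (2^k)%:R / k%:R by rewrite ler_pdivlMr //; lra.
have c0pos : 0 <= c0 by rewrite /c0 invr_ge0 ltW.
apply: le_trans (ler_wpM2r c0pos hc') _.
rewrite /c0 -natr1.
set x : R := k%:R; set t : R := (2^k)%:R; set l := ln (2 : R).
have x0 : 0 < x by rewrite /x; lra.
rewrite -subr_ge0.
have H : 0 <= 2 * (x - 1) / (x ^+ 2 * (x + 1) * l).
  apply: divr_ge0; first by rewrite /x; lra.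
  by apply: mulr_ge0; [apply: mulr_ge0; [exact: sqr_ge0|lra]|exact: ltW].
apply: (le_trans H); rewrite le_eqVlt; apply/orP; left; apply/eqP.
field.
by apply/and4P; split; rewrite gt_eqF //; rewrite /x in x0; lra.
Qed.

Lemma tail_dy (R : realType) K d : (0 < K)%N ->
  \sum_(0 <= p < (2^(K + d)).+1 | prime p && (2^K < p)%N) ((p%:R : R) * ln (p%:R : R))^-1
  <= 4 / ln (2:R) * (K%:R^-1 - (K + d)%:R^-1).
Proof.
move=> K0; elim: d => [|d IH].
  rewrite addn0 subrr mulr0 big_nat_cond big1 // => p /andP[/andP[_ h1] /andP[_ h2]]; lia.
rewrite addnS expnS (big_cat_nat (n := (2^(K+d)).+1)) //=; last by lia.
have hK : (2^K <= 2^(K+d))%N by rewrite leq_pexp2l // leq_addr.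
have eb : \sum_((2^(K+d)).+1 <= p < (2 * 2^(K+d)).+1 | prime p && (2^K < p)%N)
            ((p%:R : R) * ln (p%:R : R))^-1
        = \sum_((2^(K+d)).+1 <= p < (2 * 2^(K+d)).+1 | prime p)
            ((p%:R : R) * ln (p%:R : R))^-1.
  rewrite big_nat_cond [RHS]big_nat_cond; apply: eq_bigl => p.
  case: (prime p); rewrite ?andbF ?andbT //=.
  apply/idP/idP => [/andP[]//|/andP[h1 h2]]; rewrite h2 /=; apply/andP; split; [|lia].
  by rewrite h1.
rewrite eb.
have hb := @block R (K + d) (leq_trans K0 (leq_addr d K)).
apply: le_trans (lerD IH hb) _.
by rewrite -mulrDr addrA subrK.
Qed.

Lemma tail_N (R : realType) K N : (0 < K)%N ->
  \sum_(0 <= p < N | prime p && (2^K < p)%N) ((p%:R : R) * ln (p%:R : R))^-1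
  <= 4 / (ln (2:R) * K%:R).
Proof.
move=> K0.
have hN : (N <= (2^(K+N)).+1)%N.
  have h1 : (N < 2 ^ N)%N by apply: ltn_expl.
  have h2 : (2 ^ N <= 2^(K+N))%N by rewrite leq_pexp2l // leq_addl.
  lia.
apply: le_trans (_ : _ <= \sum_(0 <= p < (2^(K+N)).+1 | prime p && (2^K < p)%N)
    ((p%:R : R) * ln (p%:R : R))^-1) _.
  rewrite [X in _ <= X](big_cat_nat (n := N)) //= lerDl sumr_ge0 // => p /andP[pp _].
  exact: f_ge0.
apply: le_trans (@tail_dy R K N K0) _.
have l2 : (0 : R) < ln 2 by apply: ln_gt0; lra.
rewrite invfM mulrA; apply: ler_wpM2l.
  by apply: divr_ge0; lra.
by rewrite gerBl invr_ge0 ler0n.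
Qed.

Lemma cnt_le N B (P : pred nat) : (forall p, P p -> p < B)%N ->
  (\sum_(0 <= p < N | P p) 1 <= B)%N.
Proof.
move=> hP.
suff : (\sum_(0 <= p < N | P p) 1 <= minn N B)%N by lia.
elim: N => [|N IH]; first by rewrite big_geq.
rewrite big_mkcond big_nat_recr //= -big_mkcond.
change (\sum_(0 <= i < N | P i) 1 + (if P N then 1 else 0) <= minn N.+1 B)%N.
case: ifP => h.
  by have := hP N h; lia.
lia.
Qed.

Lemma prod_bound (R : realType) (L : R) (K : nat) (del : R) N :
  0 <= L -> (0 < K)%N -> 0 < del -> del <= 1 ->
  \prod_(0 <= p < N | prime p) (1 + L / ((p%:R : R) * ln (p%:R : R))) <=
  expR ((2^K).+1%:R * (ln del^-1 + del * L) + L * (4 / (ln (2 : R) * K%:R))).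
Proof.
move=> L0 K0 d0 d1.
set c := ln del^-1 + del * L.
have di : 1 <= del^-1 by rewrite invf_ge1.
have c0 : 0 <= c by apply: addr_ge0; [exact: ln_ge0 | exact: mulr_ge0 (ltW d0) L0].
have ap0 p : prime p -> 0 <= L / ((p%:R : R) * ln (p%:R : R)).
  by move=> pp; apply: mulr_ge0 => //; exact: f_ge0.
have hb p : prime p -> 1 + L / ((p%:R : R) * ln (p%:R : R))
    <= expR (if (p <= 2^K)%N then c else L / ((p%:R : R) * ln (p%:R : R))).
  move=> pp; case: ifP => _; last exact: expR_ge1Dx.
  have q1 := @plnp_ge1 R p pp.
  have apL : L / ((p%:R : R) * ln (p%:R : R)) <= L.
    by rewrite ler_pdivrMr; [nra | lra].
  rewrite /c expRD lnK ?posrE ?invr_gt0 //.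
  have dv0 : 0 <= del^-1 by rewrite invr_ge0 ltW.
  apply: le_trans _ (ler_wpM2l dv0 (expR_ge1Dx (del * L))).
  rewrite mulrDr mulr1 mulrA mulVf ?gt_eqF // mul1r; lra.
apply: le_trans (_ : _ <= \prod_(0 <= p < N | prime p)
   expR (if (p <= 2^K)%N then c else L / ((p%:R : R) * ln (p%:R : R)))) _.
  by apply: ler_prod => p pp; rewrite hb // andbT; have := ap0 p pp; lra.
rewrite -expR_sum ler_expR (bigID (fun p => (p <= 2^K)%N)) /=.
apply: lerD.
  rewrite (eq_bigr (fun _ => c)); last by move=> i /andP[_ ->].
  have -> : \sum_(0 <= i < N | prime i && (i <= 2^K)%N) c
      = (\sum_(0 <= i < N | prime i && (i <= 2^K)%N) 1)%N%:R * c.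
    by rewrite natr_sum big_distrl /=; apply: eq_bigr => i _; rewrite mul1r.
  apply: (ler_wpM2r c0); rewrite ler_nat; apply: cnt_le => p /andP[_ h].
  by rewrite ltnS.
rewrite (eq_bigr (fun i => L * ((i%:R : R) * ln (i%:R : R))^-1)); last first.
  by move=> i /andP[_ /negbTE ->].
rewrite -mulr_sumr; apply: (ler_wpM2l L0).
rewrite (eq_bigl (fun p => prime p && (2^K < p)%N)); last by move=> p; rewrite ltnNge.
exact: tail_N.
Qed.

Lemma f_ge0' (R : realType) p : 0 <= ((p%:R : R) * ln (p%:R : R))^-1.
Proof.
rewrite invr_ge0; case: p => [|p]; first by rewrite mul0r.
by apply: mulr_ge0; [exact: ler0n | apply: ln_ge0; rewrite (ler_nat R 1)].
Qed.

Lemma series_le (R : realType) (u : nat -> R) (c : R) : (forall n, 0 <= u n) ->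
  (forall N, \sum_(1 <= n < N) u n <= c) -> (\sum_(1 <= n <oo) (u n)%:E <= c%:E)%E.
Proof.
move=> u0 hN; apply: lime_le.
  by apply: is_cvg_nneseries => n _ _; rewrite lee_fin.
by apply: nearW => N; rewrite sumEFin lee_fin.
Qed.

Local Open Scope ereal_scope.

Theorem lemmaB1 (R : realType) (eps : R) (heps : (0 < eps)%R) :
  exists C : R, (0 < C)%R /\
    forall X : R, (1 < X)%R ->
      \sum_(1 <= n <oo) (termB1 X n)%:E <= (C * X `^ eps)%:E.
Proof.
pose l2 := ln (2:R).
have l2p : (0 < l2)%R by apply: ln_gt0; lra.
pose K := (Num.Def.trunc (8 / (eps * l2) + eps)).+1.
have K0 : (0 < K)%N by [].
have hK : (8 / (eps * l2) + eps < K%:R)%R := truncnS_gt _.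
pose B := (2^K).+1.
have KB : (K%:R < B%:R :> R)%R.
  by rewrite ltr_nat /B ltnS ltnW // ltn_expl.
have e8 : (0 <= 8 / (eps * l2))%R by apply: divr_ge0; [lra | apply: mulr_ge0; lra].
have B0 : (0 < B%:R :> R)%R by rewrite ltr0n.
pose del := (eps / (2 * B%:R))%R.
have d0 : (0 < del)%R by apply: divr_gt0 => //; lra.
have d1 : (del <= 1)%R by rewrite ler_pdivrMr; lra.
exists (expR (B%:R * ln del^-1)); split; first exact: expR_gt0.
move=> X X1.
set L := ln X.
have L0 : (0 < L)%R by exact: ln_gt0.
apply: series_le.
  move=> n; rewrite /termB1; case: ifP => // _; apply: prodr_ge0 => p _.
  by apply: mulr_ge0; [exact: ltW | exact: f_ge0'].
move=> N.
apply: (@le_trans _ _ (\sum_(0 <= n < N) termB1 X n)%R).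
  case: N => [|N]; first by rewrite !big_geq.
  rewrite [Y in (_ <= Y)%R]big_ltn //.
  have -> : termB1 X 0 = 0%R by rewrite /termB1.
  by rewrite add0r.
apply: le_trans (@sqf_sum R (fun p => ln X / ((p%:R : R) * ln (p%:R : R)))%R N _) _.
  by move=> p pp; apply: mulr_ge0; [exact: ltW | exact: f_ge0'].
apply: le_trans (@prod_bound R L K del N (ltW L0) K0 d0 d1) _.
have -> : (X `^ eps = expR (eps * L))%R.
  by rewrite mulrC expRM lnK // posrE; lra.
rewrite -expRD ler_expR.
have hBd : (B%:R * del = eps / 2)%R by rewrite /del; field; lra.
have ht : (4 / (ln 2 * K%:R) <= eps / 2)%R.
  have Kp : (0 < K%:R :> R)%R by rewrite ltr0n.
  rewrite ler_pdivrMr; last by apply: mulr_gt0.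
  have : (8 < K%:R * (eps * l2))%R.
    by rewrite -ltr_pdivrMr; [lra | apply: mulr_gt0].
  rewrite /l2; nra.
have := ler_wpM2l (ltW L0) ht.
rewrite mulrDr mulrA hBd /B; nra.
Qed.
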